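(* Let $Q=2^q$, $n\ge1$, $\gamma\ge0$, $\varepsilon\in[0,1]$, $\delta_1,\delta_2\ge0$, and let $A\subseteq[Q]^n$, $B\subseteq[Q]^n$ be $\gamma$-uniform with $|A|\ge Q^{n(1-\delta_1)}$ and $|B|\ge Q^{n(1-\delta_2)}$. Let $\delta>0$ be arbitrarily small. If $W$ is drawn from $\mathcal{W}_{Q,\varepsilon}$, then with probability at least $1/2$, $$\mathcal{R}^{(0)}_{W,n}\ge 2q\left(1-\left(\frac{\delta_1+\delta_2}{2}+2(1+\gamma)\varepsilon+\delta\right)\right)-2.$$
   Context: Fix an integer $q\ge1$, $Q=2^q$, $[Q]=\{1,\dots,Q\}$, and a symbol $\phi\notin[Q]$. A channel is $W=(W_1,W_2)$ with $W_i:[Q]^2\to[Q]\cup\{\phi\}$; $W^{(n)}_i(x,y)=(W_i(x_1,y_1),\dots,W_i(x_n,y_n))$ for $x,y\in[Q]^n$. A zero-error code of block length $n$ with message sets $[M_1],[M_2]$ consists of encoders $E_i:[M_i]\to[Q]^n$ and decoders $D_i:([Q]\cup\{\phi\})^n\to[M_i]$ with $D_i(W^{(n)}_i(E_1(m_1),E_2(m_2)))=m_i$ for $i=1,2$ and all message pairs; $\mathcal{R}^{(0)}_{W,n}$ is the supremum of $\frac1n\log_2(M_1M_2)$ over such codes. $\mathcal{W}_{Q,\varepsilon}$ is the distribution over channels in which, independently for every $(x,y)\in[Q]^2$, $W(x,y)=(\phi,\phi)$ with probability $\varepsilon$ and $W(x,y)=(x,y)$ otherwise. A pair $(x^{(n)},y^{(n)})\in[Q]^n\times[Q]^n$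 is $\gamma$-uniform if for every $(\alpha,\beta)\in[Q]^2$, $(1-\gamma)\frac{n}{Q^2}\le|\{i\in[n]:(x_i,y_i)=(\alpha,\beta)\}|\le(1+\gamma)\frac{n}{Q^2}$; sets $A,B\subseteq[Q]^n$ are $\gamma$-uniform if every $(x^{(n)},y^{(n)})\in A\times B$ is $\gamma$-uniform. *)

(* Defs.v *)
From Stdlib Require Import Reals.
From mathcomp Require Import all_boot.
Set Implicit Arguments. Unset Strict Implicit. Unset Printing Implicit Defensive.

Open Scope R_scope.

(* [Q] is modelled by 'I_Q = {0,...,Q-1}; phi is modelled by None in option 'I_Q. *)
Notation word Q n := ({ffun 'I_n -> 'I_Q}).
Notation oword Q n := ({ffun 'I_n -> option 'I_Q}).

Definition channel (Q : nat) :=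
  (('I_Q -> 'I_Q -> option 'I_Q) * ('I_Q -> 'I_Q -> option 'I_Q))%type.

Definition chan_n (Q n : nat) (Wi : 'I_Q -> 'I_Q -> option 'I_Q) (x y : word Q n)
  : oword Q n := [ffun k => Wi (x k) (y k)].

Definition is_zero_error_code (Q n : nat) (W : channel Q) (M1 M2 : nat)
  (E1 : 'I_M1 -> word Q n) (E2 : 'I_M2 -> word Q n)
  (D1 : oword Q n -> 'I_M1) (D2 : oword Q n -> 'I_M2) : Prop :=
  forall (m1 : 'I_M1) (m2 : 'I_M2),
    D1 (chan_n W.1 (E1 m1) (E2 m2)) = m1 /\ D2 (chan_n W.2 (E1 m1) (E2 m2)) = m2.

Definition log2 (x : R) : R := ln x / ln 2.

Definition achievable_rate (Q n : nat) (W : channel Q) (r : R) : Prop :=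
  exists (M1 M2 : nat) (E1 : 'I_M1 -> word Q n) (E2 : 'I_M2 -> word Q n)
         (D1 : oword Q n -> 'I_M1) (D2 : oword Q n -> 'I_M2),
    (0 < M1)%N /\ (0 < M2)%N /\ is_zero_error_code W E1 E2 D1 D2 /\
    r = log2 (INR (M1 * M2)) / INR n.

Definition zero_error_rate_ge (Q n : nat) (W : channel Q) (c : R) : Prop :=
  forall Rsup : R, is_lub (achievable_rate n W) Rsup -> c <= Rsup.

Definition erasure_channel (Q : nat) (S : {set 'I_Q * 'I_Q}) : channel Q :=
  (fun x y => if (x, y) \in S then None else Some x,
   fun x y => if (x, y) \in S then None else Some y).

(* Probability under W_{Q,eps} that the erasure set is exactly S
   (independent erasure of each of the Q^2 input pairs with probability eps). *)
Definition erasure_weight (Q : nat) (eps : R) (S : {set 'I_Q * 'I_Q}) : R :=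
  eps ^ #|S| * (1 - eps) ^ (Q * Q - #|S|)%N.

(* Pr_{W ~ W_{Q,eps}} [P W] >= p : some collection of erasure patterns, all of
   which satisfy P, has total probability at least p. *)
Definition prob_at_least (Q : nat) (eps : R) (P : channel Q -> Prop) (p : R) : Prop :=
  exists Ev : {set {set 'I_Q * 'I_Q}},
    (forall S, S \in Ev -> P (erasure_channel S)) /\
    p <= \big[Rplus/0]_(S in Ev) erasure_weight eps S.

Definition pair_count (Q n : nat) (x y : word Q n) (a b : 'I_Q) : nat :=
  #|[set k : 'I_n | (x k == a) && (y k == b)]|.

Definition gamma_uniform_pair (Q n : nat) (g : R) (x y : word Q n) : Prop :=
  forall a b : 'I_Q,
    (1 - g) * INR n / INR (Q * Q) <= INR (pair_count x y a b) <=
    (1 + g) * INR n / INR (Q * Q).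

Definition gamma_uniform_sets (Q n : nat) (g : R) (A B : {set word Q n}) : Prop :=
  forall x y, x \in A -> y \in B -> gamma_uniform_pair g x y.

(* Main.v *)
Require Import Defs.
From HB Require Import structures.
From Stdlib Require Import Reals Lra.
From mathcomp Require Import all_boot.
From Stdlib Require Import Lia.
From mathcomp Require Import zify.
Set Warnings "-notation-overridden,-redundant-canonical-projection".
Set Implicit Arguments. Unset Strict Implicit. Unset Printing Implicit Defensive.
Open Scope R_scope.

Lemma RplusA' : associative Rplus. Proof. intros x y z; ring. Qed.
Lemma RmultA' : associative Rmult. Proof. intros x y z; ring. Qed.
Lemma Rmult_plus_distr_r' : forall x y z : R, (x + y) * z = x * z + y * z.
Proof. intros; ring. Qed.
HB.instance Definition _ := Monoid.isComLaw.Build R 0 Rplus RplusA' Rplus_comm Rplus_0_l.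
HB.instance Definition _ := Monoid.isComLaw.Build R 1 Rmult RmultA' Rmult_comm Rmult_1_l.
HB.instance Definition _ := Monoid.isMulLaw.Build R 0 Rmult Rmult_0_l Rmult_0_r.
HB.instance Definition _ := Monoid.isAddLaw.Build R Rmult Rplus Rmult_plus_distr_r' Rmult_plus_distr_l.
Definition hdist (Q n : nat) (x y : word Q n) : nat := #|[set k | x k != y k]|.

Lemma card_sets_all (T : finType) : #|{: {set T}}| = (2 ^ #|T|)%N.
Proof.
rewrite -cardsT -(card_powerset [set: T]).
by apply: eq_card => A; rewrite powersetE subsetT inE.
Qed.

Lemma ball_card (Q n m : nat) (k0 : 'I_n) (x : word Q n) :
  (#|[set x' : word Q n | hdist x x' <= m]| <= 2 ^ n * Q ^ m)%N.
Proof.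
pose phi (x' : word Q n) : {set 'I_n} * {ffun 'I_m -> 'I_Q} :=
  ([set k | x k != x' k], [ffun i : 'I_m => x' (nth k0 (enum [set k | x k != x' k]) i)]).
rewrite -(card_in_imset (f := phi)); last first.
  move=> x1 x2; rewrite !inE /hdist => H1 H2 [] HD Hf.
  apply/ffunP => k.
  case: (boolP (k \in [set k | x k != x1 k])) => Hk; last first.
    have e1 : x k = x1 k by move: Hk; rewrite inE negbK => /eqP.
    have e2 : x k = x2 k by move: Hk; rewrite HD inE negbK => /eqP.
    by rewrite -e1 -e2.
  have Hi : (index k (enum [set k | x k != x1 k]) < m)%N.
    apply: leq_trans H1; rewrite /hdist cardE index_mem mem_enum //.
  have := congr1 (fun f : {ffun 'I_m -> 'I_Q} => f (Ordinal Hi)) Hf.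
  rewrite !ffunE /= -HD nth_index ?mem_enum //.
apply: leq_trans (max_card _) _.
by rewrite card_prod card_sets_all card_ffun !card_ord.
Qed.

Lemma packing (U : finType) (c : rel U) (V : nat) (A : {set U}) :
  symmetric c -> reflexive c -> (forall x, #|[set y | c x y]| <= V)%N ->
  exists A' : {set U}, [/\ A' \subset A,
    (forall x y, x \in A' -> y \in A' -> c x y -> x = y) & (#|A| <= #|A'| * V)%N].
Proof.
move=> csym crefl Hball.
move: {2}#|A| (leqnn #|A|) => N; elim: N A => [|N IH] A HA.
  exists set0; split; [exact: sub0set | by move=> x y; rewrite inE | ].
  by rewrite cards0 mul0n; move: HA; rewrite leqn0 => /eqP ->.
case: (set_0Vmem A) => [->|[x Hx]].
  by exists set0; split; [exact: sub0set | by move=> y z; rewrite inE | rewrite cards0].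
set B := [set y | c x y].
have HxB : x \in A :&: B by rewrite !inE Hx crefl.
have Hc := cardsID B A.
have H1 : (#|A :\: B| <= N)%N.
  have : (0 < #|A :&: B|)%N by apply/card_gt0P; exists x.
  move: HA; rewrite -Hc; lia.
have [A1 [HA1 Hsep Hcard]] := IH _ H1.
have HxA1 : x \notin A1.
  apply/negP => /(subsetP HA1); by rewrite !inE crefl.
exists (x |: A1); split.
- apply/subsetP => y; rewrite !inE => /orP[/eqP ->//|/(subsetP HA1)].
  by rewrite inE => /andP[].
- move=> y z; rewrite !inE => /orP[/eqP ->|Hy] /orP[/eqP ->|Hz] //.
  + move=> Hc'; move: (subsetP HA1 _ Hz); by rewrite !inE Hc'.
  + rewrite csym => Hc'; move: (subsetP HA1 _ Hy); by rewrite !inE Hc'.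
  + exact: Hsep.
- rewrite cardsU1 HxA1 /= mulSn -Hc.
  have : (#|A :&: B| <= V)%N by apply: leq_trans (Hball x); apply: subset_leq_card; apply: subsetIr.
  lia.
Qed.

Lemma code_rate (Q n : nat) (W : channel Q) (A1 B1 : {set word Q n}) :
  (0 < #|A1|)%N -> (0 < #|B1|)%N ->
  (forall x x' y y', x \in A1 -> x' \in A1 -> y \in B1 -> y' \in B1 ->
     chan_n W.1 x y = chan_n W.1 x' y' -> x = x') ->
  (forall x x' y y', x \in A1 -> x' \in A1 -> y \in B1 -> y' \in B1 ->
     chan_n W.2 x y = chan_n W.2 x' y' -> y = y') ->
  achievable_rate n W (log2 (INR (#|A1| * #|B1|)) / INR n).
Proof.
move=> HA HB S1 S2.
pose E1 (i : 'I_#|A1|) : word Q n := enum_val i.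
pose E2 (j : 'I_#|B1|) : word Q n := enum_val j.
pose D1 (o : oword Q n) : 'I_#|A1| :=
  match [pick i | [exists j, chan_n W.1 (E1 i) (E2 j) == o]] with
  | Some i => i | None => Ordinal HA end.
pose D2 (o : oword Q n) : 'I_#|B1| :=
  match [pick j | [exists i, chan_n W.2 (E1 i) (E2 j) == o]] with
  | Some j => j | None => Ordinal HB end.
exists #|A1|, #|B1|, E1, E2, D1, D2; split => //; split => //; split => //.
move=> m1 m2; split.
- rewrite /D1; case: pickP => [i /existsP [j /eqP Hij] | Hn].
    apply: enum_val_inj; apply: (S1 _ _ _ _ _ _ _ _ Hij); exact: enum_valP.
  by move: (Hn m1); rewrite (_ : [exists j, _] = true) //; apply/existsP; exists m2.
- rewrite /D2; case: pickP => [j /existsP [i /eqP Hij] | Hn].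
    apply: enum_val_inj; apply: (S2 _ _ _ _ _ _ _ _ Hij); exact: enum_valP.
  by move: (Hn m2); rewrite (_ : [exists i, _] = true) //; apply/existsP; exists m1.
Qed.

Definition ercount (Q n : nat) (S : {set 'I_Q * 'I_Q}) (x y : word Q n) : nat :=
  #|[set k | (x k, y k) \in S]|.

Lemma ercount_sum (Q n : nat) (S : {set 'I_Q * 'I_Q}) (x y : word Q n) :
  ercount S x y = (\sum_(s in S) pair_count x y s.1 s.2)%N.
Proof.
rewrite /ercount -sum1_card.
rewrite (partition_big (fun k => (x k, y k)) (fun s => s \in S)) /=; last by move=> k; rewrite inE.
apply: eq_bigr => s Hs; rewrite /pair_count -sum1_card.
apply: eq_bigl => k; rewrite !inE.
case: s Hs => a b Hs /=; rewrite xpair_eqE.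
case: (x k =P a) => [->|] /=; last by rewrite andbF.
by case: (y k =P b) => [->|]; rewrite ?Hs ?andbF.
Qed.

Lemma chan1_sep (Q n : nat) (S : {set 'I_Q * 'I_Q}) (x x' y y' : word Q n) :
  chan_n (erasure_channel S).1 x y = chan_n (erasure_channel S).1 x' y' ->
  [set k | x k != x' k] \subset [set k | (x k, y k) \in S].
Proof.
move=> H; apply/subsetP => k; rewrite !inE; apply: contraR => Hk.
have := congr1 (fun f : oword Q n => f k) H; rewrite /chan_n !ffunE /= (negbTE Hk).
by case: ((x' k, y' k) \in S) => // -[->].
Qed.

Lemma chan2_sep (Q n : nat) (S : {set 'I_Q * 'I_Q}) (x x' y y' : word Q n) :
  chan_n (erasure_channel S).2 x y = chan_n (erasure_channel S).2 x' y' ->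
  [set k | y k != y' k] \subset [set k | (x k, y k) \in S].
Proof.
move=> H; apply/subsetP => k; rewrite !inE; apply: contraR => Hk.
have := congr1 (fun f : oword Q n => f k) H; rewrite /chan_n !ffunE /= (negbTE Hk).
by case: ((x' k, y' k) \in S) => // -[->].
Qed.

Lemma INR_muln (a b : nat) : INR (a * b)%N = INR a * INR b.
Proof. exact: mult_INR. Qed.

Lemma INR_expn (a k : nat) : INR (a ^ k)%N = INR a ^ k.
Proof. elim: k => [|k IH]; first by rewrite expn0. by rewrite expnS INR_muln IH. Qed.

Lemma ln_le' (x y : R) : 0 < x -> x <= y -> ln x <= ln y.
Proof.
move=> Hx [H|->]; last by right.
by left; apply: ln_increasing.
Qed.

Lemma ln2_pos : 0 < ln 2.
Proof. rewrite -ln_1; apply: ln_increasing; lra. Qed.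

Lemma ln_pow2 (k : nat) : ln (INR (2 ^ k)%N) = INR k * ln 2.
Proof. rewrite INR_expn ln_pow //; simpl; lra. Qed.

Definition Rleb (x y : R) : bool := if Rle_dec x y then true else false.
Lemma RlebP x y : reflect (x <= y) (Rleb x y).
Proof. by rewrite /Rleb; case: Rle_dec => H; constructor. Qed.

Lemma Rle_big (I : Type) (r : seq I) (P : pred I) (F G : I -> R) :
  (forall i, P i -> F i <= G i) ->
  \big[Rplus/0]_(i <- r | P i) F i <= \big[Rplus/0]_(i <- r | P i) G i.
Proof.
move=> H; apply: (big_ind2 (fun a b => a <= b)) => //; first lra.
by move=> *; apply: Rplus_le_compat.
Qed.
Lemma INR_sum (I : Type) (r : seq I) (P : pred I) (F : I -> nat) :
  INR (\sum_(i <- r | P i) F i)%N = \big[Rplus/0]_(i <- r | P i) INR (F i).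
Proof. by apply: (big_morph INR plus_INR). Qed.
Lemma iter_Rplus (c : R) k : iter k (Rplus c) 0 = INR k * c.
Proof. elim: k => [|k IH]; first by rewrite /=; ring. rewrite iterS IH S_INR; ring. Qed.

Lemma ercount_le (q n : nat) (g eps : R) (S : {set 'I_(2^q) * 'I_(2^q)}) (x y : word (2^q) n) :
  0 <= g -> INR #|S| <= 2 * eps * INR (2^q * 2^q)%N -> gamma_uniform_pair g x y ->
  INR (ercount S x y) <= 2 * (1 + g) * eps * INR n.
Proof.
move=> Hg HS Hu.
have HQ : 0 < INR (2^q * 2^q)%N by apply: lt_0_INR; apply/ltP; rewrite muln_gt0 expn_gt0.
rewrite ercount_sum INR_sum.
apply: Rle_trans (_ : \big[Rplus/0]_(s in S) ((1 + g) * INR n / INR (2^q * 2^q)%N) <= _).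
  by apply: Rle_big => s _; case: (Hu s.1 s.2).
rewrite big_const iter_Rplus.
have Hn := pos_INR n.
have : 0 <= (1 + g) * INR n / INR (2 ^ q * 2 ^ q)%N.
  apply: Rmult_le_pos; [nra|]; apply/Rlt_le/Rinv_0_lt_compat => //.
move=> H0.
apply: Rle_trans (Rmult_le_compat_r _ _ _ H0 HS) _.
move: HQ; set N := INR (2 ^ q * 2 ^ q)%N => HQ.
apply: Req_le; field; lra.
Qed.

Lemma floor_max (n : nat) (t : R) : 0 <= t ->
  INR (\max_(k < n.+1 | Rleb (INR k) t) k) <= t /\
  forall d, (d <= n)%N -> INR d <= t -> (d <= \max_(k < n.+1 | Rleb (INR k) t) k)%N.
Proof.
move=> Ht; split.
  have P0 : Rleb (INR (@ord0 n)) t by apply/RlebP.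
  rewrite (bigmax_eq_arg ord0) //.
  by case: arg_maxnP => //= i /RlebP.
move=> d Hd Hdt.
have Hd' : (d < n.+1)%N by [].
exact: (leq_bigmax_cond (Ordinal Hd') (F := fun k : 'I_n.+1 => nat_of_ord k) (P := fun k : 'I_n.+1 => Rleb (INR k) t) (introT (RlebP _ _) Hdt)).
Qed.

Lemma hdist_sym (Q n : nat) (x y : word Q n) : hdist x y = hdist y x.
Proof. by apply: eq_card => k; rewrite !inE eq_sym. Qed.
Lemma hdist_refl (Q n : nat) (x : word Q n) : hdist x x = 0%N.
Proof. by apply: eq_card0 => k; rewrite !inE eqxx. Qed.

Lemma good_channel (q n : nat) (g eps d1 d2 delta : R)
  (A B : {set word (2 ^ q)%N n}) (S : {set 'I_(2^q) * 'I_(2^q)}) :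
  (1 <= q)%N -> (1 <= n)%N ->
  0 <= g -> 0 <= eps -> 
  gamma_uniform_sets g A B ->
  Rpower (INR (2 ^ q)%N) (INR n * (1 - d1)) <= INR #|A| ->
  Rpower (INR (2 ^ q)%N) (INR n * (1 - d2)) <= INR #|B| ->
  0 < delta ->
  INR #|S| <= 2 * eps * INR (2^q * 2^q)%N ->
  zero_error_rate_ge n (erasure_channel S)
       (2 * INR q * (1 - ((d1 + d2) / 2 + 2 * (1 + g) * eps + delta)) - 2).
Proof.
move=> Hq Hn Hg He Hu HA HB Hdelta HS.
set t := 2 * (1 + g) * eps * INR n.
have Hn0 : 0 < INR n by apply: lt_0_INR; apply/ltP.
have Ht : 0 <= t by rewrite /t; apply: Rmult_le_pos; [nra|lra].
have [Hm1 Hm2] := floor_max n Ht.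
set m := \max_(k < n.+1 | Rleb (INR k) t) k in Hm1 Hm2.
have Herm : forall x y, x \in A -> y \in B -> (ercount S x y <= m)%N.
  move=> x y Hx Hy; apply: Hm2.
    by rewrite /ercount; apply: leq_trans (max_card _) _; rewrite card_ord.
  exact: ercount_le Hg HS (Hu x y Hx Hy).
pose c := fun x y : word (2^q) n => (hdist x y <= m)%N.
have csym : symmetric c by move=> x y; rewrite /c hdist_sym.
have crefl : reflexive c by move=> x; rewrite /c hdist_refl.
have k0 : 'I_n by exact: (Ordinal Hn).
have Hball : forall x, (#|[set y | c x y]| <= 2 ^ n * (2^q) ^ m)%N.
  by move=> x; exact: ball_card k0 x.
have [A1 [HA1 SA HcA]] := packing A csym crefl Hball.
have [B1 [HB1 SB HcB]] := packing B csym crefl Hball.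
have HApos : 0 < INR #|A| by apply: Rlt_le_trans HA; apply: exp_pos.
have HBpos : 0 < INR #|B| by apply: Rlt_le_trans HB; apply: exp_pos.
have HA0 : (0 < #|A|)%N.
  case E: #|A| => //; move: HApos; rewrite E /=; lra.
have HB0 : (0 < #|B|)%N.
  case E: #|B| => //; move: HBpos; rewrite E /=; lra.
have HA1pos : (0 < #|A1|)%N.
  rewrite lt0n; apply/eqP => E; move: HcA; rewrite E mul0n leqn0 => /eqP E'.
  by move: HA0; rewrite E'.
have HB1pos : (0 < #|B1|)%N.
  rewrite lt0n; apply/eqP => E; move: HcB; rewrite E mul0n leqn0 => /eqP E'.
  by move: HB0; rewrite E'.
have Hach := @code_rate (2^q) n (erasure_channel S) A1 B1 HA1pos HB1pos.
have Hr : achievable_rate n (erasure_channel S) (log2 (INR (#|A1| * #|B1|)) / INR n).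
  apply: Hach.
  - move=> x x' y y' Hx Hx' Hy Hy' Hch.
    have Hx0 := subsetP HA1 _ Hx; have Hx0' := subsetP HA1 _ Hx'; have Hy0 := subsetP HB1 _ Hy.
    apply: SA => //; rewrite /c; apply: leq_trans (Herm x y Hx0 Hy0).
    exact: subset_leq_card (chan1_sep Hch).
  - move=> x x' y y' Hx Hx' Hy Hy' Hch.
    have Hx0 := subsetP HA1 _ Hx; have Hy0' := subsetP HB1 _ Hy'; have Hy0 := subsetP HB1 _ Hy.
    apply: SB => //; rewrite /c; apply: leq_trans (Herm x y Hx0 Hy0).
    exact: subset_leq_card (chan2_sep Hch).
move=> Rsup [Hub _].
apply: Rle_trans (Hub _ Hr).
have L2 := ln2_pos.
have HQpos : 0 < INR (2 ^ q)%N by apply: lt_0_INR; apply/ltP; rewrite expn_gt0.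
have HV : ln (INR (2 ^ n * (2 ^ q) ^ m)%N) = (INR n + INR q * INR m) * ln 2.
  rewrite -expnM -expnD ln_pow2 plus_INR INR_muln; ring.
have HVpos : 0 < INR (2 ^ n * (2 ^ q) ^ m)%N.
  by apply: lt_0_INR; apply/ltP; rewrite muln_gt0 !expn_gt0.
have HA1p : 0 < INR #|A1| by apply: lt_0_INR; apply/ltP.
have HB1p : 0 < INR #|B1| by apply: lt_0_INR; apply/ltP.
have Ha1 : INR n * (1 - d1) * INR q * ln 2 - (INR n + INR q * INR m) * ln 2 <= ln (INR #|A1|).
  have H1 : ln (Rpower (INR (2 ^ q)%N) (INR n * (1 - d1))) <= ln (INR #|A1| * INR (2 ^ n * (2 ^ q) ^ m)%N).
    apply: ln_le'; first by apply: exp_pos.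
    apply: Rle_trans HA _; rewrite -INR_muln; apply: le_INR; apply/leP; exact: HcA.
  move: H1; rewrite ln_mult // HV /Rpower ln_exp ln_pow2; lra.
have Hb1 : INR n * (1 - d2) * INR q * ln 2 - (INR n + INR q * INR m) * ln 2 <= ln (INR #|B1|).
  have H1 : ln (Rpower (INR (2 ^ q)%N) (INR n * (1 - d2))) <= ln (INR #|B1| * INR (2 ^ n * (2 ^ q) ^ m)%N).
    apply: ln_le'; first by apply: exp_pos.
    apply: Rle_trans HB _; rewrite -INR_muln; apply: le_INR; apply/leP; exact: HcB.
  move: H1; rewrite ln_mult // HV /Rpower ln_exp ln_pow2; lra.
set T0 := 2 * INR q * (1 - ((d1 + d2) / 2 + 2 * (1 + g) * eps + delta)) - 2.
have Hq0 := pos_INR q.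
have key : T0 * INR n <= INR n * (1 - d1) * INR q + INR n * (1 - d2) * INR q - 2 * (INR n + INR q * INR m).
  have E : INR n * (1 - d1) * INR q + INR n * (1 - d2) * INR q - 2 * (INR n + INR q * INR m) - T0 * INR n
         = 2 * INR q * INR n * delta + 2 * INR q * (t - INR m) by rewrite /T0 /t; field.
  have : 0 <= 2 * INR q * INR n * delta by apply: Rmult_le_pos; [nra|lra].
  have : 0 <= 2 * INR q * (t - INR m) by apply: Rmult_le_pos; lra.
  lra.
rewrite /log2 INR_muln ln_mult //.
apply: (Rmult_le_reg_r (INR n * ln 2)); first by apply: Rmult_lt_0_compat.
have -> : (ln (INR #|A1|) + ln (INR #|B1|)) / ln 2 / INR n * (INR n * ln 2) = ln (INR #|A1|) + ln (INR #|B1|).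
  field; lra.
have := Rmult_le_compat_r _ _ _ (Rlt_le _ _ L2) key.
lra.
Qed.
Lemma sum_sets (T : finType) (F : T -> bool -> R) :
  \big[Rplus/0]_(S : {set T}) \big[Rmult/1]_(t : T) F t (t \in S) =
  \big[Rmult/1]_(t : T) (F t true + F t false).
Proof.
transitivity (\big[Rmult/1]_(t : T) \big[Rplus/0]_(b : bool) F t b).
  rewrite bigA_distr_bigA.
  rewrite (reindex (fun S : {set T} => [ffun t => t \in S])) /=.
    by apply: eq_bigr => S _; apply: eq_bigr => t _; rewrite ffunE.
  exists (fun f : {ffun T -> bool} => [set t | f t]) => f _.
    by apply/setP => t; rewrite inE ffunE.
  by apply/ffunP => t; rewrite ffunE inE.
apply: eq_bigr => t _.
rewrite big_bool /=. by rewrite Rplus_comm.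
Qed.

Lemma iter_Rmult (c : R) k : iter k (Rmult c) 1 = c ^ k.
Proof. by elim: k => //= k ->. Qed.


Definition wprod (T : finType) (p : R) (S : {set T}) :=
  \big[Rmult/1]_(t : T) (if t \in S then p else 1 - p).

Lemma wprodE (T : finType) (p : R) (S : {set T}) :
  wprod p S = p ^ #|S| * (1 - p) ^ (#|T| - #|S|)%N.
Proof.
rewrite /wprod (bigID (fun t => t \in S)) /=.
rewrite (eq_bigr (fun=> p)); last by move=> t ->.
rewrite [X in _ * X](eq_bigr (fun=> 1 - p)); last by move=> t /negbTE ->.
rewrite !big_const !iter_Rmult.
congr (_ * _ ^ _).
rewrite (cardsCs S) subKn ?max_card //.
by apply: eq_card => t; rewrite !inE.
Qed.



Lemma INR_card (T : finType) (A : {pred T}) :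
  INR #|A| = \big[Rplus/0]_(t : T) (if t \in A then 1 else 0).
Proof.
rewrite -sum1_card INR_sum big_mkcond /=.
by apply: eq_bigr => t _; case: (t \in A).
Qed.

Lemma sum_w (T : finType) (p : R) :
  \big[Rplus/0]_(S : {set T}) wprod p S = 1.
Proof.
rewrite /wprod (sum_sets (fun t b => if b then p else 1 - p)).
by rewrite big1 // => t _; ring.
Qed.

Lemma sum_w_in (T : finType) (p : R) (t0 : T) :
  \big[Rplus/0]_(S : {set T}) (if t0 \in S then wprod p S else 0) = p.
Proof.
pose F t (b : bool) := if t == t0 then (if b then p else 0) else (if b then p else 1 - p).
transitivity (\big[Rplus/0]_(S : {set T}) \big[Rmult/1]_(t : T) F t (t \in S)).
  apply: eq_bigr => S _; rewrite /wprod (bigD1 t0) //= [in RHS](bigD1 t0) //=.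
  rewrite /F eqxx.
  rewrite [in RHS](eq_bigr (fun t => if t \in S then p else 1 - p)); last first.
    by move=> t /negbTE ->.
  by case: (t0 \in S); ring.
rewrite sum_sets (bigD1 t0) //= big1; first by rewrite /F eqxx; ring.
by move=> t /negbTE Ht; rewrite /F Ht; ring.
Qed.

Lemma sum_w_card (T : finType) (p : R) :
  \big[Rplus/0]_(S : {set T}) (INR #|S| * wprod p S) = INR #|T| * p.
Proof.
transitivity (\big[Rplus/0]_(S : {set T}) \big[Rplus/0]_(t : T) (if t \in S then wprod p S else 0)).
  apply: eq_bigr => S _; rewrite INR_card big_distrl /=.
  by apply: eq_bigr => t _; case: (t \in S); ring.
rewrite exchange_big /= (eq_bigr (fun=> p)); last by move=> t _; exact: sum_w_in.
by rewrite big_const iter_Rplus.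
Qed.


Lemma Rsum_ge0 (I : Type) (r : seq I) (P : pred I) (F : I -> R) :
  (forall i, P i -> 0 <= F i) -> 0 <= \big[Rplus/0]_(i <- r | P i) F i.
Proof.
move=> H; apply: (big_ind (fun a => 0 <= a)) => //; first lra.
by move=> *; apply: Rplus_le_le_0_compat.
Qed.

Lemma wprod_ge0 (T : finType) p (S : {set T}) : 0 <= p <= 1 -> 0 <= wprod p S.
Proof.
move=> Hp; apply: (big_ind (fun a => 0 <= a)) => //; first lra.
  by move=> *; apply: Rmult_le_pos.
by move=> t _; case: (t \in S); lra.
Qed.

Lemma markov (T : finType) (p : R) : 0 < p <= 1 -> (0 < #|T|)%N ->
  / 2 <= \big[Rplus/0]_(S in [set S : {set T} | Rleb (INR #|S|) (2 * p * INR #|T|)]) wprod p S.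
Proof.
move=> Hp HT.
have HN : 0 < INR #|T| by apply: lt_0_INR; apply/ltP.
have Hd : 0 < 2 * p * INR #|T| by apply: Rmult_lt_0_compat; lra.
set Ev := [set S : {set T} | _].
have H1 := sum_w T p.
rewrite (bigID (fun S => S \in Ev)) /= in H1.
set a := \big[Rplus/0]_(i | i \in Ev) wprod p i in H1 *.
set b := \big[Rplus/0]_(i | i \notin Ev) wprod p i in H1.
suff : b <= /2 by lra.
have Hb : b <= \big[Rplus/0]_(S | S \notin Ev) (INR #|S| / (2 * p * INR #|T|) * wprod p S).
  apply: Rle_big => S; rewrite inE => /RlebP HS.
  have Hw := wprod_ge0 S (conj (Rlt_le _ _ (proj1 Hp)) (proj2 Hp)).
  rewrite -[X in X <= _]Rmult_1_l; apply: Rmult_le_compat_r => //.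
  apply: (Rmult_le_reg_r (2 * p * INR #|T|)) => //.
  replace (INR #|S| / (2 * p * INR #|T|) * (2 * p * INR #|T|)) with (INR #|S|) by (field; lra); lra.
apply: (Rle_trans _ _ _ Hb).
have Hall := sum_w_card T p.
have : \big[Rplus/0]_(S | S \notin Ev) (INR #|S| / (2 * p * INR #|T|) * wprod p S) <=
       \big[Rplus/0]_(S : {set T}) (INR #|S| / (2 * p * INR #|T|) * wprod p S).
  rewrite [X in _ <= X](bigID (fun S => S \in Ev)) /=.
  rewrite -[X in X <= _]Rplus_0_l; apply: Rplus_le_compat_r.
  apply: Rsum_ge0 => S _.
  have Hw := wprod_ge0 S (conj (Rlt_le _ _ (proj1 Hp)) (proj2 Hp)).
  apply: Rmult_le_pos => //; apply: Rmult_le_pos; [apply: pos_INR|].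
  by apply/Rlt_le/Rinv_0_lt_compat.
move=> H2; apply: (Rle_trans _ _ _ H2).
rewrite (eq_bigr (fun S : {set T} => / (2 * p * INR #|T|) * (INR #|S| * wprod p S))); last first.
  by move=> S _; rewrite /Rdiv; ring.
rewrite -big_distrr /= Hall.
move: Hd HN; set N := INR #|T| => Hd HN; apply: Req_le; field; lra.
Qed.

Lemma ew_wprod (Q : nat) (eps : R) (S : {set 'I_Q * 'I_Q}) :
  erasure_weight eps S = wprod eps S.
Proof. by rewrite wprodE /erasure_weight card_prod !card_ord. Qed.

Theorem theorem2 (q n : nat) (g eps d1 d2 delta : R)
  (A B : {set word (2 ^ q)%N n}) :
  (1 <= q)%N -> (1 <= n)%N ->
  0 <= g -> 0 <= eps <= 1 -> 0 <= d1 -> 0 <= d2 ->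
  gamma_uniform_sets g A B ->
  Rpower (INR (2 ^ q)%N) (INR n * (1 - d1)) <= INR #|A| ->
  Rpower (INR (2 ^ q)%N) (INR n * (1 - d2)) <= INR #|B| ->
  0 < delta ->
  @prob_at_least (2 ^ q)%N eps
    (fun W => zero_error_rate_ge n W
       (2 * INR q * (1 - ((d1 + d2) / 2 + 2 * (1 + g) * eps + delta)) - 2))
    (/ 2).
Proof.
move=> Hq Hn Hg [He0 He1] Hd1 Hd2 Hu HA HB Hdelta.
have HT : #|{: 'I_(2^q) * 'I_(2^q)}| = (2^q * 2^q)%N by rewrite card_prod card_ord.
case: (Rle_lt_or_eq_dec 0 eps He0) => [Hpos|Heq].
- exists [set S : {set 'I_(2^q) * 'I_(2^q)} | Rleb (INR #|S|) (2 * eps * INR #|{: 'I_(2^q) * 'I_(2^q)}|)].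
  split.
    move=> S; rewrite inE => /RlebP HS.
    apply: (good_channel Hq Hn Hg He0 Hu HA HB Hdelta); move: HS; by rewrite card_prod !card_ord.
  rewrite (eq_bigr (fun S => wprod eps S)); last by move=> S _; exact: ew_wprod.
  apply: markov; first lra.
  by rewrite HT muln_gt0 expn_gt0.
- subst eps.
  exists [set set0]; split.
    move=> S; rewrite inE => /eqP ->.
    apply: (good_channel Hq Hn Hg (Rle_refl 0) Hu HA HB Hdelta).
    rewrite cards0 /=; lra.
  rewrite big_set1 /erasure_weight cards0 /= Rminus_0_r pow1; lra.
Qed.
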